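(* Let $G$ be an alternating directed acyclic graph on $[n]$ with $G^{un}$ connected, and let $d\ge1$. A subgraph $H\subseteq G$ gives a face $\tilde Q_H$ of $\tilde Q_G$ of codimension $d$ if and only if $H^{un}$ has $d+1$ connected components and $E(H)=E(H_1)\cap\dots\cap E(H_d)$ for some subgraphs $H_1,\dots,H_d\subseteq G$ such that each $\tilde Q_{H_i}$ is a facet of $\tilde Q_G$.
   Context: Conventions: $G$ is a directed acyclic graph with vertex set $[n]$, every edge $(i,j)$ satisfying $i<j$; subgraphs $H\subseteq G$ have $V(H)=[n]$, $E(H)\subseteq E(G)$; $^{un}$ denotes underlying undirected graph. $\tilde Q_G=\mathrm{conv}(\{\mathbf 0\}\cup\{\mathbf e_i-\mathbf e_j:(i,j)\in E(G)\})\subset\mathbb R^n$. $G$ is alternating if there is no vertex $j$ with $(i,j),(j,k)\in E(G)$. A facet is a face of codimension 1. *)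

(* Defs.v *)
From HB Require Import structures.
From mathcomp Require Import all_boot all_order all_algebra.
Set Implicit Arguments. Unset Strict Implicit. Unset Printing Implicit Defensive.
Import Order.TTheory GRing.Theory Num.Theory.
Local Open Scope ring_scope.

Notation edges n := {set 'I_n * 'I_n}.

(* every edge (i,j) satisfies i < j (hence G is acyclic) *)
Definition increasing_dag n (G : edges n) : Prop :=
  forall e, e \in G -> (val e.1 < val e.2)%N.

Definition alternating n (G : edges n) : Prop :=
  ~ exists i j k : 'I_n, ((i, j) \in G) /\ ((j, k) \in G).

Definition undir n (G : edges n) : rel 'I_n :=
  fun i j => ((i, j) \in G) || ((j, i) \in G).

Definition un_connected n (G : edges n) : Prop :=
  forall i j : 'I_n, connect (undir G) i j.

Definition n_components n (G : edges n) : nat :=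
  #|[set [set j | connect (undir G) i j] | i : 'I_n]|.

Definition evec (R : realFieldType) n (i : 'I_n) : 'rV[R]_n := delta_mx 0 i.

Definition Qpoints (R : realFieldType) n (G : edges n) : seq 'rV[R]_n :=
  0 :: [seq evec R e.1 - evec R e.2 | e <- enum G].

Definition conv (R : realFieldType) n (S : seq 'rV[R]_n) : 'rV[R]_n -> Prop :=
  fun x => exists w : 'I_(size S) -> R,
    (forall k, 0 <= w k) /\ \sum_k w k = 1 /\ x = \sum_k w k *: S`_k.

Definition Qtilde (R : realFieldType) n (G : edges n) : 'rV[R]_n -> Prop :=
  conv (Qpoints R G).

Definition dotv (R : realFieldType) n (x a : 'rV[R]_n) : R := \sum_i x 0 i * a 0 i.

(* F is a face of P: the intersection of P with a (weakly) supporting hyperplane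
   (a = 0 allowed, giving P itself). *)
Definition is_face (R : realFieldType) n (P F : 'rV[R]_n -> Prop) : Prop :=
  exists (a : 'rV[R]_n) (b : R),
    (forall x, P x -> dotv x a <= b) /\
    (forall x, F x <-> (P x /\ dotv x a = b)).

Definition aff_indep (R : realFieldType) n k (p : 'I_k.+1 -> 'rV[R]_n) : bool :=
  row_free (\matrix_(i < k, j < n) (p (lift ord0 i) 0 j - p ord0 0 j)).

Definition has_dim (R : realFieldType) n (P : 'rV[R]_n -> Prop) (d : nat) : Prop :=
  (exists p : 'I_d.+1 -> 'rV[R]_n, (forall i, P (p i)) /\ aff_indep p) /\
  (forall p : 'I_d.+2 -> 'rV[R]_n, (forall i, P (p i)) -> ~~ aff_indep p).

Definition face_codim (R : realFieldType) n (P F : 'rV[R]_n -> Prop) (c : nat) : Prop :=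
  is_face P F /\ exists m, has_dim P (m + c) /\ has_dim F m.

Definition is_facet (R : realFieldType) n (P F : 'rV[R]_n -> Prop) : Prop :=
  face_codim P F 1.

(* Main.v *)
Require Import Defs.
From HB Require Import structures.
From mathcomp Require Import all_boot all_order all_algebra zify.
Set Implicit Arguments. Unset Strict Implicit. Unset Printing Implicit Defensive.
Import Order.TTheory GRing.Theory Num.Theory.

Section Graph.
Variable T : finType.

Lemma connect_inv (e : rel T) (X : pred T) x y :
  (forall z w, X z -> e z w -> X w) -> X x -> connect e x y -> X y.
Proof.
move=> cl Xx /connectP[p ep ->]; elim: p x Xx ep => //= z p IH x Xx /andP[exz pz].
exact: (IH z (cl _ _ Xx exz)).
Qed.

Lemma connect_mono_in (e e' : rel T) (X : pred T) x y :
  (forall z w, X z -> e z w -> X w /\ e' z w) -> X x -> connect e x y -> connect e' x y.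
Proof.
move=> cl Xx /connectP[p ep ->]; elim: p x Xx ep => /= [x _ _|z p IH x Xx /andP[exz pz]].
  exact: connect0.
have [Xz e'xz] := cl _ _ Xx exz.
exact: connect_trans (connect1 e'xz) (IH z Xz pz).
Qed.

Lemma connect_mono (e e' : rel T) x y :
  (forall z w, e z w -> e' z w) -> connect e x y -> connect e' x y.
Proof.
move=> h; apply: (@connect_mono_in e e' predT) => // z w _ ezw; split=> //; exact: h.
Qed.

End Graph.

Section Comb.
Variable n : nat.
Implicit Types (G H : edges n) (S A U X Y : {set 'I_n}).

Definition rG G S : rel 'I_n := fun x y => [&& x \in S, y \in S & undir G x y].
Definition connS G S := forall x y, x \in S -> y \in S -> connect (rG G S) x y.
Definition hclosed H A := forall x y, x \in A -> connect (undir H) x y -> y \in A.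
Definition hcomp H x := [set y | connect (undir H) x y].
Definition ncomp H S := #|hcomp H @: S|.
Definition adjb G X Y := [exists x in X, exists y in Y, undir G x y].
Definition validc G H S A : Prop :=
  A \subset S /\ A != set0 /\ S :\: A != set0 /\ connS G A /\ connS G (S :\: A) /\ hclosed H A
   /\ (forall x y, (x, y) \in G -> x \in S :\: A -> y \in A -> False).

Lemma undir_sym G : symmetric (undir G).
Proof. by move=> x y; rewrite /undir orbC. Qed.

Lemma rG_sym G S : symmetric (rG G S).
Proof. by move=> x y; rewrite /rG undir_sym; case: (x \in S); case: (y \in S). Qed.

Lemma connect_undir_sym G x y : connect (undir G) x y = connect (undir G) y x.
Proof. exact: (sym_connect_sym (@undir_sym G)). Qed.

Lemma connect_rG_sym G S x y : connect (rG G S) x y = connect (rG G S) y x.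
Proof. exact: (sym_connect_sym (@rG_sym G S)). Qed.

Lemma rG_mono G S S' x y : S \subset S' -> connect (rG G S) x y -> connect (rG G S') x y.
Proof.
move=> sub; apply: connect_mono => z w /and3P[zS wS e].
by rewrite /rG (subsetP sub _ zS) (subsetP sub _ wS).
Qed.

Lemma connS_U G X Y : connS G X -> connS G Y -> adjb G X Y -> connS G (X :|: Y).
Proof.
move=> cX cY /existsP[a /andP[aX /existsP[b /andP[bY ab]]]].
have sX : X \subset X :|: Y by apply: subsetUl.
have sY : Y \subset X :|: Y by apply: subsetUr.
have eab : connect (rG G (X :|: Y)) a b.
  by apply: connect1; rewrite /rG (subsetP sX _ aX) (subsetP sY _ bY).
have XY : forall x y, x \in X -> y \in Y -> connect (rG G (X :|: Y)) x y.
  move=> x y xX yY; apply: connect_trans (rG_mono sX (cX _ _ xX aX)) _.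
  exact: connect_trans eab (rG_mono sY (cY _ _ bY yY)).
move=> x y; rewrite !inE => /orP[xX|xY] /orP[yX|yY].
- exact: rG_mono sX (cX _ _ xX yX).
- exact: XY.
- by rewrite connect_rG_sym; apply: XY.
- exact: rG_mono sY (cY _ _ xY yY).
Qed.

Lemma adj_split G S X x y : connS G S -> X \subset S -> x \in X -> y \in S :\: X ->
  adjb G X (S :\: X).
Proof.
move=> cS sXS xX yD; case: (boolP (adjb G X (S :\: X))) => // nadj; exfalso.
have yS : y \in S by move: yD; rewrite inE => /andP[].
have xS : x \in S := subsetP sXS _ xX.
have yX : y \in X.
  apply: (@connect_inv _ (rG G S) (fun z => z \in X) x y _ xX (cS _ _ xS yS)).
  move=> z w zX /and3P[_ wS e] /=; case: (boolP (w \in X)) => // wX.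
  case/negP: nadj; apply/existsP; exists z; rewrite zX /=.
  by apply/existsP; exists w; rewrite inE wX wS e.
by move: yD; rewrite inE yX.
Qed.

Lemma hcomp_eq H x y : (hcomp H x == hcomp H y) = connect (undir H) x y.
Proof.
apply/eqP/idP => [e|c].
  have : y \in hcomp H y by rewrite inE connect0.
  by rewrite -e inE.
apply/setP => z; rewrite !inE; apply/idP/idP => h.
  by apply: connect_trans h; rewrite connect_undir_sym.
exact: connect_trans c h.
Qed.

Lemma ncomp_split H S A : hclosed H A -> A \subset S ->
  ncomp H S = ncomp H A + ncomp H (S :\: A).
Proof.
move=> hA sAS; rewrite /ncomp.
have eS : S = A :|: (S :\: A).
  apply/setP => x; rewrite !inE; case: (boolP (x \in A)) => xA //=.
  by rewrite (subsetP sAS _ xA).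
rewrite {1}eS imsetU cardsU.
suff -> : hcomp H @: A :&: hcomp H @: (S :\: A) = set0 by rewrite cards0 subn0.
apply/setP => c; rewrite !inE; apply/negP => /andP[/imsetP[x xA ->] /imsetP[y yD /eqP]].
rewrite hcomp_eq => cxy; move: yD; rewrite !inE (hA _ _ xA cxy) /=.
by [].
Qed.

End Comb.

Section Ext.
Variable n : nat.
Implicit Types (G H : edges n) (S P A U V X Y : {set 'I_n}).

Lemma id1 S P U : P \subset S -> U \subset P -> S :\: U = (P :\: U) :|: (S :\: P).
Proof.
move=> /subsetP h' /subsetP h; apply/setP => x; rewrite !inE; move: (h' x) (h x) => /implyP h1 /implyP h2; move: h1 h2.
by case: (x \in U); case: (x \in P); case: (x \in S).
Qed.

Lemma id2 S P U : P \subset S -> S :\: (U :|: (S :\: P)) = P :\: U.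
Proof.
move=> /subsetP h; apply/setP => x; rewrite !inE; move: (h x) => /implyP h1; move: h1.
by case: (x \in U); case: (x \in P); case: (x \in S).
Qed.

Lemma id3 S P U : S :\: (P :|: U) = (S :\: P) :\: U.
Proof.
apply/setP => x; rewrite !inE.
by case: (x \in U); case: (x \in P); case: (x \in S).
Qed.

Lemma id4 S P U : P \subset S -> U \subset S :\: P -> S :\: U = P :|: ((S :\: P) :\: U).
Proof.
move=> /subsetP h /subsetP h'; apply/setP => x; rewrite !inE; move: (h' x) (h x) => /implyP h1 /implyP h2; move: h1 h2.
rewrite inE.
by case: (x \in U); case: (x \in P); case: (x \in S).
Qed.

Lemma hclosedD H S A : hclosed H S -> hclosed H A -> hclosed H (S :\: A).
Proof.
move=> hS hA x y; rewrite !inE => /andP[xA xS] cxy; rewrite (hS _ _ xS cxy) andbT.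
apply/negP => yA; move/negP: xA; apply; apply: hA yA _.
by rewrite connect_undir_sym.
Qed.

Lemma hclosedU H A B : hclosed H A -> hclosed H B -> hclosed H (A :|: B).
Proof.
move=> hA hB x y; rewrite !inE => /orP[xA|xB] cxy.
  by rewrite (hA _ _ xA cxy).
by rewrite (hB _ _ xB cxy) orbT.
Qed.

Lemma adjbP G X Y : reflect (exists x y, [/\ x \in X, y \in Y & undir G x y]) (adjb G X Y).
Proof.
apply: (iffP existsP) => [[x /andP[xX /existsP[y /andP[yY e]]]]|[x [y [xX yY e]]]].
  by exists x, y.
by exists x; rewrite xX; apply/existsP; exists y; rewrite yY.
Qed.

Lemma edge_undir G x y : (x, y) \in G -> undir G x y.
Proof. by rewrite /undir => ->. Qed.

Lemma extA G H S P U : connS G S -> hclosed H S -> validc G H S P -> validc G H P U ->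
  exists U', validc G H S U' /\ forall x, x \in P -> (x \in U') = (x \in U).
Proof.
move=> cS hS [sPS [P0 [B0 [cP [cB [hP bP]]]]]] [sUP [U0 [V0 [cU [cV [hU bU]]]]]].
have sUS := subset_trans sUP sPS.
have /set0Pn[a aP] := P0. have /set0Pn[b bB] := B0.
have adjPB := adj_split cS sPS aP bB.
case: (boolP (adjb G (P :\: U) (S :\: P))) => adjVB.
  exists U; split=> //; split=> //; split=> //; split.
    have /set0Pn[v vV] := V0; apply/set0Pn; exists v.
    by rewrite (id1 sPS sUP) inE vV.
  split=> //; split; first by rewrite (id1 sPS sUP); apply: connS_U.
  split=> // x y e; rewrite (id1 sPS sUP) inE => /orP[xV|xB] yU.
    exact: bU e xV yU.
  exact: bP e xB (subsetP sUP _ yU).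
exists (U :|: (S :\: P)); split; last by move=> x xP; rewrite inE in_setD xP /= orbF.
have e2 := id2 U sPS.
split; first by rewrite subUset sUS subsetDl.
split; first by apply/set0Pn; have /set0Pn[u uU] := U0; exists u; rewrite inE uU.
split; first by rewrite e2.
split.
  apply: connS_U => //; move/adjbP: adjPB => [x [y [xP yB e]]].
  apply/adjbP; exists x, y; split=> //.
  case: (boolP (x \in U)) => // xU; case/negP: adjVB; apply/adjbP; exists x, y.
  by rewrite inE xU xP.
split; first by rewrite e2.
split; first by apply: hclosedU => //; apply: hclosedD.
move=> x y e; rewrite e2 => xV; rewrite inE => /orP[yU|yB]; first exact: bU e xV yU.
by case/negP: adjVB; apply/adjbP; exists x, y; rewrite xV yB edge_undir.
Qed.

Lemma extB G H S P U : connS G S -> hclosed H S -> validc G H S P -> validc G H (S :\: P) U ->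
  exists U', validc G H S U' /\ forall x, x \in S :\: P -> (x \in U') = (x \in U).
Proof.
move=> cS hS [sPS [P0 [B0 [cP [cB [hP bP]]]]]] [sUB [U0 [V0 [cU [cV [hU bU]]]]]].
have sUS : U \subset S by apply: subset_trans sUB (subsetDl _ _).
have /set0Pn[a aP] := P0. have /set0Pn[b bB] := B0.
have adjPB := adj_split cS sPS aP bB.
have hB : hclosed H (S :\: P) by apply: hclosedD.
case: (boolP (adjb G P U)) => adjPU.
  exists (P :|: U); split; last first.
    by move=> x; rewrite inE => /andP[xP _]; rewrite inE (negbTE xP).
  split; first by rewrite subUset sPS.
  split; first by apply/set0Pn; exists a; rewrite inE aP.
  split; first by rewrite id3.
  split; first exact: connS_U.
  split; first by rewrite id3.
  split; first exact: hclosedU.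
  move=> x y e; rewrite id3 => xV; rewrite inE => /orP[yP|yU].
    by apply: bP e _ yP; move: xV; rewrite inE => /andP[].
  exact: bU e xV yU.
exists U; split => //.
have e4 := id4 sPS sUB.
split=> //; split=> //.
split; first by apply/set0Pn; exists a; rewrite e4 inE aP.
split=> //; split.
  rewrite e4; apply: connS_U => //; move/adjbP: adjPB => [x [y [xP yB e]]].
  apply/adjbP; exists x, y; split=> //.
  rewrite inE yB andbT; apply/negP => yU; case/negP: adjPU; apply/adjbP.
  by exists x, y.
split=> // x y e; rewrite e4 inE => /orP[xP|xV] yU; last exact: bU e xV yU.
by case/negP: adjPU; apply/adjbP; exists x, y; rewrite xP yU edge_undir.
Qed.

End Ext.

Lemma seq_choice (X Y : eqType) (s : seq X) (Q : X -> Y -> Prop) :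
  (forall x, x \in s -> exists y, Q x y) ->
  exists s' : seq Y, [/\ size s' = size s,
    (forall y, y \in s' -> exists2 x, x \in s & Q x y) &
    (forall x, x \in s -> exists2 y, y \in s' & Q x y)].
Proof.
elim: s => [|x s IH] h; first by exists [::].
have [y Qy] := h x (mem_head _ _).
have [s' [e1 e2 e3]] : exists s' : seq Y, [/\ size s' = size s,
    (forall y, y \in s' -> exists2 x, x \in s & Q x y) &
    (forall x, x \in s -> exists2 y, y \in s' & Q x y)].
  by apply: IH => z zs; apply: h; rewrite in_cons zs orbT.
exists (y :: s'); split; first by rewrite /= e1.
  move=> z; rewrite in_cons => /orP[/eqP ->|zs]; first by exists x => //; exact: mem_head.
  by have [w ws Qw] := e2 _ zs; exists w => //; rewrite in_cons ws orbT.
move=> z; rewrite in_cons => /orP[/eqP ->|zs]; first by exists y => //; exact: mem_head.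
by have [w ws Qw] := e3 _ zs; exists w => //; rewrite in_cons ws orbT.
Qed.

Section Cuts.
Local Open Scope ring_scope.
Variables (R : realFieldType) (n : nat) (G H : edges n) (f : 'I_n -> R).
Hypothesis hHG : H \subset G.
Hypothesis hf1 : forall x y, (x, y) \in G -> f x <= f y.
Hypothesis hf2 : forall x y, (x, y) \in G -> ((x, y) \in H <-> f x = f y).

Lemma fconst x y : connect (undir H) x y -> f x = f y.
Proof.
move=> c; apply/eqP; rewrite eq_sym.
apply: (@connect_inv _ (undir H) (fun z => f z == f x) x y) => //= z w /eqP <- /orP[e|e].
  by rewrite ((hf2 (subsetP hHG _ e)).1 e).
by rewrite ((hf2 (subsetP hHG _ e)).1 e).
Qed.

Lemma undirHG x y : undir H x y -> undir G x y.
Proof. by case/orP => e; rewrite /undir (subsetP hHG _ e) ?orbT. Qed.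

Lemma ncomp_gt0 (S : {set 'I_n}) x : x \in S -> (0 < ncomp H S)%N.
Proof. by move=> xS; rewrite /ncomp card_gt0; apply/set0Pn; exists (hcomp H x); apply: imset_f. Qed.

Lemma cut_exists (S : {set 'I_n}) : hclosed H S -> connS G S -> (1 < ncomp H S)%N ->
  exists P, validc G H S P.
Proof.
move=> hS cS n1.
have [v0 v0S] : exists v0, v0 \in S.
  case: (boolP (S == set0)) => [/eqP S0|/set0Pn //].
  by move: n1; rewrite /ncomp S0 imset0 cards0.
case: (arg_maxP f v0S) => v vS vmax.
have compvS : forall w, w \in hcomp H v -> w \in S.
  by move=> w; rewrite inE; apply: hS.
have [u uS uv] : exists2 u, u \in S & ~~ connect (undir H) v u.
  case: (boolP [exists u in S, ~~ connect (undir H) v u]).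
    by move/existsP => [u /andP[uS uv]]; exists u.
  move=> nex; exfalso; move: n1; apply/negP; rewrite -leqNgt; apply/card_le1_eqP.
  move=> c1 c2 /imsetP[x xS ->] /imsetP[y yS ->]; apply/eqP; rewrite hcomp_eq.
  have cv : forall z, z \in S -> connect (undir H) v z.
    move=> z zS; case: (boolP (connect (undir H) v z)) => // nc.
    by case/negP: nex; apply/existsP; exists z; rewrite zS.
  have d1 := cv _ yS; have d2 := cv _ xS; rewrite connect_undir_sym in d1; exact: connect_trans d1 d2.
set T := S :\: hcomp H v.
have uT : u \in T by rewrite inE uS inE uv.
have vT : v \notin T by rewrite inE inE connect0.
set P := [set y | connect (rG G T) u y].
have PT : forall y, y \in P -> y \in T.
  move=> y; rewrite inE; apply: (@connect_inv _ (rG G T) (fun z => z \in T)) => //.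
  by move=> z w _ /and3P[].
have PS : forall y, y \in P -> y \in S.
  by move=> y /PT; rewrite inE => /andP[].
have stepP : forall z w, z \in P -> w \in T -> undir G z w -> w \in P.
  move=> z w zP wT e; have c : connect (rG G T) u z by rewrite inE in zP.
  rewrite inE; apply: connect_trans c _.
  by apply: connect1; rewrite /rG (PT _ zP) wT e.
have notT : forall w, w \in S -> w \notin T -> connect (undir H) v w.
  by move=> w wS; rewrite inE wS andbT inE negbK.
have uP : u \in P by rewrite inE connect0.
have vP : v \notin P by apply/negP => /PT; rewrite (negbTE vT).
set B := S :\: P.
have vB : v \in B by rewrite inE vP.
have compB : forall a, connect (undir H) v a -> connect (rG G B) v a.
  move=> a; apply: (@connect_mono_in _ _ _ (fun z => connect (undir H) v z)) => //.
  move=> z w cz e; have cw : connect (undir H) v w := connect_trans cz (connect1 e).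
  split=> //; rewrite /rG undirHG // andbT.
  have zS : z \in S by apply: compvS; rewrite inE.
  have wS : w \in S by apply: compvS; rewrite inE.
  rewrite /B !in_setD zS wS !andbT; apply/andP; split; apply/negP => /PT.
    by rewrite in_setD inE cz.
  by rewrite in_setD inE cw.
exists P; split; first by apply/subsetP => y /PS.
split; first by apply/set0Pn; exists u.
split; first by apply/set0Pn; exists v.
split.
  move=> x y xP yP.
  have cxy : connect (rG G T) x y.
    move: xP yP; rewrite !inE => cx cy; apply: connect_trans cy.
    by rewrite connect_rG_sym.
  apply: (@connect_mono_in _ _ _ (fun z => z \in P)) cxy => // z w zP /and3P[_ wT e].
  have wP := stepP _ _ zP wT e.
  by split=> //; rewrite /rG zP wP.
split.
  have key : forall x, x \in B -> connect (rG G B) v x.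
    move=> x xB; have xS : x \in S by move: xB; rewrite inE => /andP[].
    have : (x \in P) || connect (rG G B) v x.
      apply: (@connect_inv _ (rG G S) (fun z => (z \in P) || connect (rG G B) v z) v x);
        last exact: cS; last by rewrite connect0 orbT.
      move=> z w /orP[zP|cz] /and3P[zS wS e]; case: (boolP (w \in P)) => //= wP.
        case: (boolP (w \in T)) => wT; first by rewrite (stepP _ _ zP wT e) in wP.
        exact: compB (notT _ wS wT).
      have zB : z \in B.
        apply: (@connect_inv _ (rG G B) (fun z => z \in B) v z) => //.
        by move=> a b _ /and3P[].
      apply: connect_trans cz (connect1 _).
      by rewrite /rG zB inE wP wS e.
    by move: xB; rewrite inE => /andP[/negbTE ->].
  move=> x y xB yB; apply: connect_trans (key _ yB).
  by rewrite connect_rG_sym key.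
split.
  move=> x y xP cxy.
  apply: (@connect_inv _ (undir H) (fun z => z \in P) x y) => // z w zP e.
  have zT := PT _ zP.
  have zS := PS _ zP.
  have wS : w \in S by apply: hS zS (connect1 e).
  case: (boolP (w \in T)) => wT; first exact: stepP zP wT (undirHG e).
  have := notT _ wS wT => cw.
  move: zT; rewrite inE inE (connect_trans cw _) //.
  by apply: connect1; rewrite undir_sym.
move=> x y e; rewrite inE => /andP[xP xS] yP.
have yT := PT _ yP.
case: (boolP (x \in T)) => xT.
  case/negP: xP; apply: stepP yP xT _.
  by rewrite undir_sym edge_undir.
have cx := notT _ xS xT.
have fxv := fconst cx.
have fyv : f y <= f v := vmax _ (PS _ yP).
have fxy : f x = f y by apply/eqP; rewrite eq_le hf1 //= -fxv.
have /(hf2 e) exy := fxy.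
move: yT; rewrite inE inE.
by rewrite (connect_trans cx (connect1 (edge_undir exy))).
Qed.

End Cuts.

Section Ind.
Local Open Scope ring_scope.
Variables (R : realFieldType) (n : nat) (G H : edges n) (f : 'I_n -> R).
Hypothesis hHG : H \subset G.
Hypothesis hf1 : forall x y, (x, y) \in G -> f x <= f y.
Hypothesis hf2 : forall x y, (x, y) \in G -> ((x, y) \in H <-> f x = f y).

Lemma cuts_exist k (S : {set 'I_n}) : (#|S| <= k)%N -> S != set0 -> hclosed H S -> connS G S ->
  exists L : seq {set 'I_n}, [/\ size L = (ncomp H S).-1,
    (forall A, A \in L -> validc G H S A) &
    (forall x y, (x, y) \in G -> x \in S -> y \in S -> (x, y) \notin H ->
       exists2 A, A \in L & (x \in A) != (y \in A))].
Proof.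
elim: k S => [|k IH] S cardS S0 hS cS.
  by move: S0; rewrite -card_gt0; case: #|S| cardS.
have /set0Pn[x0 x0S] := S0.
case: (leqP (ncomp H S) 1) => nc.
  exists [::]; split => //.
    by have := ncomp_gt0 H x0S; case: (ncomp H S) nc => [|[|]].
  move=> x y e xS yS nH; exfalso; move/negP: nH; apply.
  apply/(hf2 e); apply: (fconst hHG hf2).
  rewrite -hcomp_eq; apply/eqP.
  by move/card_le1_eqP: nc; apply; apply: imset_f.
have [P vP] := cut_exists hHG hf1 hf2 hS cS nc.
have [sPS [P0 [B0 [cP [cB [hP bP]]]]]] := vP.
have /set0Pn[a aP] := P0.
have /set0Pn[b bB] := B0.
have ltP : (#|P| < #|S|)%N.
  apply: proper_card; rewrite properE sPS /=; apply/negP => /subsetP/(_ b).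
  by move: bB; rewrite inE => /andP[/negbTE -> ->] /(_ isT).
have ltB : (#|S :\: P| < #|S|)%N.
  apply: proper_card; rewrite properE subsetDl /=; apply/negP => /subsetP/(_ a).
  by rewrite inE aP (subsetP sPS _ aP) => /(_ isT).
have hB : hclosed H (S :\: P) by apply: hclosedD.
have [LA [sA vA cA]] := IH P (leq_trans ltP cardS) P0 hP cP.
have [LB [sB vB cB']] := IH (S :\: P) (leq_trans ltB cardS) B0 hB cB.
have [LA' [sA' vA' cA']] := @seq_choice _ _ LA (fun U U' => validc G H S U' /\
    forall x, x \in P -> (x \in U') = (x \in U)) (fun U hU => extA cS hS vP (vA U hU)).
have [LB' [sB' vB' cB'']] := @seq_choice _ _ LB (fun U U' => validc G H S U' /\
    forall x, x \in S :\: P -> (x \in U') = (x \in U)) (fun U hU => extB cS hS vP (vB U hU)).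
exists (P :: LA' ++ LB'); split.
- rewrite /= size_cat sA' sB' sA sB (ncomp_split hP sPS).
  have := ncomp_gt0 H aP; have := ncomp_gt0 H bB.
  move=> h1 h2; lia.
- move=> A; rewrite in_cons mem_cat => /orP[/eqP ->//|/orP[hA|hA]].
    by have [U _ [vU _]] := vA' _ hA.
  by have [U _ [vU _]] := vB' _ hA.
- move=> x y e xS yS nH.
  case: (boolP (x \in P)) => xP; case: (boolP (y \in P)) => yP.
  + have [U UA sU] := cA _ _ e xP yP nH.
    have [U' U'A [_ pU]] := cA' _ UA.
    by exists U'; [rewrite in_cons mem_cat U'A orbT | rewrite !pU].
  + by exists P; [exact: mem_head | move: xP yP; case: (x \in P); case: (y \in P)].
  + by exists P; [exact: mem_head | move: xP yP; case: (x \in P); case: (y \in P)].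
  + have xB : x \in S :\: P by rewrite inE xP.
    have yB : y \in S :\: P by rewrite inE yP.
    have [U UB sU] := cB' _ _ e xB yB nH.
    have [U' U'B [_ pU]] := cB'' _ UB.
    by exists U'; [rewrite in_cons mem_cat U'B !orbT | rewrite !pU].
Qed.

End Ind.

Section Geo.
Local Open Scope ring_scope.
Variables (R : realFieldType) (n : nat).
Local Notation ev := (evec R (n:=n)).
Local Notation vec := 'rV[R]_n.

Lemma evE i k : ev i 0 k = (i == k)%:R.
Proof. by rewrite /evec mxE eqxx /= eq_sym. Qed.

Lemma dotv_sum m (w : 'I_m -> R) (y : 'I_m -> vec) (a : vec) :
  dotv (\sum_k w k *: y k) a = \sum_k w k * dotv (y k) a.
Proof.
rewrite /dotv.
under eq_bigr do rewrite summxE.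
under eq_bigr do under eq_bigr do rewrite mxE.
under [RHS]eq_bigr do rewrite mulr_sumr.
rewrite exchange_big /=; apply: eq_bigr => k _; rewrite mulr_suml.
by apply: eq_bigr => i _; rewrite mulrA.
Qed.

Lemma dotvB (x y a : vec) : dotv (x - y) a = dotv x a - dotv y a.
Proof.
rewrite /dotv -sumrB; apply: eq_bigr => i _; rewrite !mxE mulrBl.
by [].
Qed.

Lemma dotv0 (a : vec) : dotv (0 : vec) a = 0.
Proof. by rewrite /dotv big1 // => i _; rewrite mxE mul0r. Qed.

Lemma dotv_ev i (a : vec) : dotv (ev i) a = a 0 i.
Proof.
rewrite /dotv (bigD1 i) //= evE eqxx mul1r big1 ?addr0 // => k ki.
by rewrite evE eq_sym (negbTE ki) mul0r.
Qed.

Lemma conv_pt (S : seq vec) (k : 'I_(size S)) : conv S S`_k.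
Proof.
exists (fun t => (t == k)%:R); split; first by move=> t; rewrite ler0n.
split; first by rewrite (bigD1 k) //= eqxx big1 ?addr0 // => t /negbTE ->.
rewrite (bigD1 k) //= eqxx scale1r big1 ?addr0 // => t /negbTE ->.
by rewrite scale0r.
Qed.

Lemma conv_mem (S : seq vec) y : y \in S -> conv S y.
Proof.
move=> yS; have hi : (index y S < size S)%N by rewrite index_mem.
by have := conv_pt (Ordinal hi); rewrite /= nth_index.
Qed.

Lemma conv_comb (T : seq vec) m (w : 'I_m -> R) (y : 'I_m -> vec) :
  (forall t, 0 <= w t) -> \sum_t w t = 1 -> (forall t, conv T (y t)) ->
  conv T (\sum_t w t *: y t).
Proof.
move=> w0 w1 cy.
have [v hv] := fin_all_exists cy.
exists (fun l => \sum_t w t * v t l); split.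
  by move=> l; apply: sumr_ge0 => t _; apply: mulr_ge0 => //; case: (hv t) => + _; apply.
split.
  rewrite exchange_big /= -w1; apply: eq_bigr => t _.
  by rewrite -mulr_sumr; case: (hv t) => _ [-> _]; rewrite mulr1.
under [RHS]eq_bigr do rewrite scaler_suml.
rewrite exchange_big /=; apply: eq_bigr => t _.
case: (hv t) => _ [_ ->]; rewrite scaler_sumr; apply: eq_bigr => l _.
by rewrite scalerA.
Qed.

Lemma conv_dot (S : seq vec) x (a : vec) b :
  (forall y, y \in S -> dotv y a <= b) -> conv S x -> dotv x a <= b.
Proof.
move=> hS [w [w0 [w1 ->]]]; rewrite dotv_sum.
have -> : b = \sum_k w k * b by rewrite -mulr_suml w1 mul1r.
apply: ler_sum => k _; apply: ler_wpM2l => //; apply: hS; exact: mem_nth.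
Qed.

Lemma Qpoints_mem (G : edges n) y :
  y \in Qpoints R G = (y == 0) || [exists e in G, y == ev e.1 - ev e.2].
Proof.
rewrite /Qpoints in_cons; congr (_ || _); apply/mapP/existsP => [[e eG ->]|[e /andP[eG /eqP ->]]].
  by exists e; rewrite -mem_enum eG /=.
by exists e; rewrite ?mem_enum.
Qed.



Lemma Qpoints_sub (G H : edges n) y : H \subset G -> y \in Qpoints R H -> y \in Qpoints R G.
Proof.
move=> sHG; rewrite !Qpoints_mem => /orP[->//|/existsP[e /andP[eH ye]]].
by apply/orP; right; apply/existsP; exists e; rewrite (subsetP sHG _ eH).
Qed.

Lemma Qtilde_sub (G H : edges n) x : H \subset G -> Qtilde (R:=R) H x -> Qtilde (R:=R) G x.
Proof.
move=> sHG [w [w0 [w1 ->]]]; apply: conv_comb => // t.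
by apply: conv_mem; apply: Qpoints_sub sHG _; apply: mem_nth.
Qed.

Lemma dot_evev i j k l :
  dotv (ev k - ev l) (ev i - ev j) = (i == k)%:R - (j == k)%:R - ((i == l)%:R - (j == l)%:R).
Proof. by rewrite dotvB !dotv_ev !(evE, mxE). Qed.

Lemma vertex (G H : edges n) e : increasing_dag G -> alternating G -> H \subset G ->
  e \in G -> Qtilde (R:=R) H (ev e.1 - ev e.2) -> e \in H.
Proof.
move=> hdag halt sHG eG hx; case: (boolP (e \in H)) => // eH; exfalso.
case: e eG eH hx => i j /= eG eH hx.
have ij : i != j by apply/negP => /eqP ij; have := hdag _ eG; rewrite /= ij ltnn.
have le1 : forall y, y \in Qpoints R H -> dotv y (ev i - ev j) <= 1.
  move=> y; rewrite Qpoints_mem => /orP[/eqP ->|/existsP[[k l] /andP[klH /eqP ->]]].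
    by rewrite dotv0 ler01.
  have klG := subsetP sHG _ klH.
  rewrite /= dot_evev.
  have jk : (j == k) = false.
    apply/negP => /eqP jk; apply: halt; exists i, j, l; split => //; by rewrite jk.
  have il : (i == l) = false.
    apply/negP => /eqP il; apply: halt; exists k, i, j; split => //; by rewrite il.
  rewrite jk il subr0 sub0r opprK.
  case: (boolP (i == k)) => ik; case: (boolP (j == l)) => jl => /=.
  - by move: eH; rewrite (eqP ik) (eqP jl) klH.
  - by rewrite addr0 lexx.
  - by rewrite add0r lexx.
  - by rewrite addr0 ler01.
have := conv_dot le1 hx.
rewrite dot_evev eqxx (negbTE ij) eq_sym (negbTE ij) subr0 sub0r opprK.
by rewrite eqxx -natrD lern1.
Qed.

Lemma Qt_pt (G : edges n) y : y \in Qpoints R G -> Qtilde (R:=R) G y.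
Proof. exact: conv_mem. Qed.

Lemma Qt0 (G : edges n) : Qtilde (R:=R) G 0.
Proof. by apply: Qt_pt; rewrite Qpoints_mem eqxx. Qed.

Lemma Qt_edge (G : edges n) x y : (x, y) \in G -> Qtilde (R:=R) G (ev x - ev y).
Proof. by move=> e; apply: Qt_pt; rewrite Qpoints_mem; apply/orP; right; apply/existsP; exists (x, y); rewrite e /=. Qed.

Lemma face_iff (G H : edges n) : increasing_dag G -> alternating G -> H \subset G ->
  is_face (Qtilde (R:=R) G) (Qtilde (R:=R) H) <->
  exists f : 'I_n -> R, (forall x y, (x, y) \in G -> f x <= f y) /\
    (forall x y, (x, y) \in G -> ((x, y) \in H <-> f x = f y)).
Proof.
move=> hdag halt sHG; split.
  move=> [a [b [hle hiff]]].
  have b0 : b = 0 by have [_] := (hiff 0).1 (Qt0 H); rewrite dotv0.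
  have dE : forall x y, dotv (ev x - ev y) a = a 0 x - a 0 y.
    by move=> x y; rewrite dotvB !dotv_ev.
  exists (fun x => a 0 x); split.
    by move=> x y e; rewrite -subr_le0 -dE -b0; apply: hle; apply: Qt_edge.
  move=> x y e; split.
    move=> eH; have [_] := (hiff _).1 (Qt_edge eH); rewrite dE b0.
    by move/eqP; rewrite subr_eq0 => /eqP.
  move=> fxy; have := (hiff (ev x - ev y)).2; rewrite dE fxy subrr b0.
  by move/(_ (conj (Qt_edge e) erefl)); apply: (vertex hdag halt sHG e).
move=> [f [hf1 hf2]].
have dE : forall x y, dotv (ev x - ev y) (\row_j f j) = f x - f y.
  by move=> x y; rewrite dotvB !dotv_ev !mxE.
have ptG : forall y, y \in Qpoints R G -> dotv y (\row_j f j) <= 0.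
  move=> y; rewrite Qpoints_mem => /orP[/eqP ->|/existsP[[x z] /andP[e /eqP ->]]].
    by rewrite dotv0.
  by rewrite dE subr_le0; apply: hf1.
have ptH : forall y, y \in Qpoints R H -> dotv y (\row_j f j) = 0.
  move=> y; rewrite Qpoints_mem => /orP[/eqP ->|/existsP[[x z] /andP[e /eqP ->]]].
    by rewrite dotv0.
  by rewrite dE; apply/eqP; rewrite subr_eq0; apply/eqP; apply/(hf2 _ _ (subsetP sHG _ e)).
exists (\row_j f j), 0; split; first by move=> x; apply: conv_dot.
move=> x; split.
  move=> hx; split; first exact: Qtilde_sub hx.
  case: hx => w [w0 [w1 ->]]; rewrite dotv_sum big1 // => t _.
  by rewrite ptH ?mulr0 //; apply: mem_nth.
case=> -[w [w0 [w1 ->]]] d0.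
rewrite dotv_sum in d0.
have each : forall t, w t * dotv (Qpoints R G)`_t (\row_j f j) = 0.
  move=> t; apply/eqP; rewrite -oppr_eq0; apply/eqP; move: t (isT : true).
  apply/psumr_eq0P; last by rewrite sumrN d0 oppr0.
  move=> t _; rewrite oppr_ge0; apply: mulr_ge0_le0 => //.
  by apply: ptG; apply: mem_nth.
have -> : \sum_t w t *: (Qpoints R G)`_t =
    \sum_t w t *: (if w t == 0 then 0 else (Qpoints R G)`_t).
  by apply: eq_bigr => t _; case: (boolP (w t == 0)) => [/eqP ->|//]; rewrite !scale0r.
apply: conv_comb => // t; case: (boolP (w t == 0)) => wt0; first exact: Qt0.
have := each t; move/eqP; rewrite mulf_eq0 (negbTE wt0) /= => /eqP dt.
have : (Qpoints R G)`_t \in Qpoints R G by apply: mem_nth.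
rewrite Qpoints_mem => /orP[/eqP ->|/existsP[[x1 z1] /andP[e /eqP pe]]]; first exact: Qt0.
rewrite pe; apply: Qt_edge; apply/(hf2 _ _ e).
by apply/eqP; rewrite -subr_eq0 -dE -pe dt.
Qed.

End Geo.

Section Reps.
Local Open Scope ring_scope.
Variables (n : nat) (H : edges n).
Local Notation cn := (connect (undir H)).

Definition Rep := [set r : 'I_n | [forall j, cn r j ==> (r <= j)%N]].

Lemma rep_ex j : exists2 r, r \in Rep & cn r j.
Proof.
case: (@arg_minnP _ j (fun k => cn j k) val (connect0 _ _)) => r cjr rmin.
exists r; last by rewrite connect_undir_sym.
rewrite inE; apply/forallP => k; apply/implyP => crk.
by apply: rmin; apply: connect_trans cjr crk.
Qed.

Lemma rep_uniq r r' : r \in Rep -> r' \in Rep -> cn r r' -> r = r'.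
Proof.
rewrite !inE => /forallP h /forallP h' c; apply: val_inj; apply/eqP; rewrite eqn_leq.
rewrite (implyP (h r') c) (implyP (h' r)) //.
by rewrite connect_undir_sym.
Qed.

Lemma card_Rep : #|Rep| = n_components H.
Proof.
rewrite /n_components.
have -> : [set [set j | cn i j] | i : 'I_n] = hcomp H @: Rep.
  apply/setP => s; apply/imsetP/imsetP => [[i _ ->]|[r _ ->]]; last by exists r.
  have [r rR cri] := rep_ex i; exists r => //.
  by change (hcomp H i = hcomp H r); apply/eqP; rewrite hcomp_eq connect_undir_sym.
rewrite card_in_imset // => r r' rR r'R /eqP; rewrite hcomp_eq.
exact: rep_uniq.
Qed.

Definition fr (a : 'I_#|Rep|) : 'I_n := enum_val a.

Lemma fr_in a : fr a \in Rep.
Proof. exact: enum_valP. Qed.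

Lemma fr_ex j : exists a, cn (fr a) j.
Proof.
have [r rR crj] := rep_ex j; exists (enum_rank_in rR r).
by rewrite /fr enum_rankK_in.
Qed.

Lemma fr_uniq a b j : cn (fr a) j -> cn (fr b) j -> a = b.
Proof.
move=> ca cb; apply: enum_val_inj; apply: rep_uniq (fr_in a) (fr_in b) _.
by apply: connect_trans ca _; rewrite connect_undir_sym.
Qed.

Lemma sum_fr (R : nzRingType) (w : 'I_#|Rep| -> R) j a : cn (fr a) j ->
  \sum_b w b * (cn (fr b) j)%:R = w a.
Proof.
move=> ca; rewrite (bigD1 a) //= ca mulr1 big1 ?addr0 // => b ba.
case: (boolP (cn (fr b) j)) => cb; last by rewrite mulr0.
by rewrite (fr_uniq cb ca) eqxx in ba.
Qed.

End Reps.

Section Dim.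
Local Open Scope ring_scope.
Variables (R : realFieldType) (n : nat) (H : edges n).
Local Notation cn := (connect (undir H)).
Local Notation ev := (evec R (n:=n)).

Definition Lp : seq 'rV[R]_n := [seq ev e.1 - ev e.2 | e <- enum H].
Definition Em : 'M[R]_(size Lp, n) := \matrix_(k < size Lp) Lp`_k.
Definition RR : 'M[R]_(#|Rep H|, n) := \matrix_(a, j) (cn (fr a) j)%:R.

Lemma Lp_mem (k : 'I_(size Lp)) : exists x y, (x, y) \in H /\ Lp`_k = ev x - ev y.
Proof.
have /mapP[[x y] xyH ->] := mem_nth 0 (ltn_ord k).
by exists x, y; rewrite -mem_enum.
Qed.

Lemma Lp_edge x y : (x, y) \in H -> exists k : 'I_(size Lp), Lp`_k = ev x - ev y.
Proof.
move=> e; have ie : (index (x, y) (enum H) < size Lp)%N by rewrite size_map index_mem mem_enum.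
exists (Ordinal ie); rewrite /= (nth_map (x, y)) ?nth_index ?mem_enum //.
by rewrite -(size_map (fun e => ev e.1 - ev e.2)).
Qed.

Lemma dot_row (g : 'I_n -> R) x y : dotv (ev x - ev y) (\row_j g j) = g x - g y.
Proof. by rewrite dotvB !dotv_ev !mxE. Qed.

Lemma cn_edge x y : (x, y) \in H -> forall z, cn z x = cn z y.
Proof.
move=> e z; apply/idP/idP => c.
  by apply: connect_trans c (connect1 _); rewrite /undir e.
by apply: connect_trans c (connect1 _); rewrite /undir e orbT.
Qed.

Lemma RR_free : row_free RR.
Proof.
apply: inj_row_free => v hv; apply/rowP => b.
have := congr1 (fun M : 'rV_n => M 0 (fr b)) hv; rewrite /= !mxE => <-.
under eq_bigr do rewrite mxE.
by rewrite (sum_fr _ (connect0 _ _)).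
Qed.

Lemma rankE_le : (\rank Em <= n - #|Rep H|)%N.
Proof.
have : (Em <= kermx RR^T)%MS.
  apply/sub_kermxP; apply/matrixP => k a; rewrite !mxE.
  have [x [y [e hk]]] := Lp_mem k.
  have := dot_row (fun j => (cn (fr a) j)%:R) x y; rewrite -hk /dotv.
  rewrite (cn_edge e) subrr => h; rewrite -[in RHS]h; apply: eq_bigr => j _; rewrite !mxE.
  by [].
move/mxrankS; rewrite mxrank_ker mxrank_tr.
by move: RR_free; rewrite /row_free => /eqP ->.
Qed.

Lemma ker_const (u : 'rV[R]_n) : u *m Em^T = 0 -> forall x y, (x, y) \in H -> u 0 x = u 0 y.
Proof.
move=> u0 x y e; have [k hk] := Lp_edge e.
have := congr1 (fun M : 'rV_(size Lp) => M 0 k) u0; rewrite /= !mxE => h.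
have h2 : u 0 x - u 0 y = 0.
  rewrite -(dot_row (fun j => u 0 j)) -hk /dotv; apply: etrans h; apply: eq_bigr => j _.
  by rewrite !mxE mulrC.
by apply/eqP; rewrite -subr_eq0; apply/eqP.
Qed.

Lemma ker_constc (u : 'rV[R]_n) : u *m Em^T = 0 -> forall x y, cn x y -> u 0 x = u 0 y.
Proof.
move=> u0 x y c; apply/eqP; rewrite eq_sym.
apply: (@connect_inv _ (undir H) (fun z => u 0 z == u 0 x) x y) => //= z w /eqP <- /orP[e|e].
  by rewrite (ker_const u0 e).
by rewrite (ker_const u0 e).
Qed.

Lemma rankE_ge : (n - \rank Em <= #|Rep H|)%N.
Proof.
rewrite -(mxrank_tr Em) -mxrank_ker.
apply: leq_trans (rank_leq_row RR); apply: mxrankS; apply/row_subP => i.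
have u0 : row i (kermx Em^T) *m Em^T = 0 by rewrite -row_mul mulmx_ker row0.
move: u0; move: (row i _) => u u0.
suff -> : u = (\row_a u 0 (fr a)) *m RR by apply: submxMl.
apply/rowP => j; rewrite !mxE.
have [a ca] := fr_ex H j.
under eq_bigr do rewrite !mxE.
by rewrite (sum_fr _ ca) (ker_constc u0 ca).
Qed.

Lemma rankE : \rank Em = (n - n_components H)%N.
Proof.
rewrite -card_Rep.
have h1 := rankE_le; have h2 := rankE_ge; have h3 := rank_leq_col Em.
lia.
Qed.
End Dim.

Section HasDim.
Local Open Scope ring_scope.
Variables (R : realFieldType) (n : nat).

Lemma rowsub_free m p q (g : 'I_p -> 'I_m) (A : 'M[R]_(m, q)) :
  injective g -> row_free A -> row_free (rowsub g A).
Proof.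
move=> ginj fA; apply: inj_row_free => v hv.
have : (v *m rowsub g 1%:M) *m A = 0 by rewrite -mulmxA -rowsubE.
move/eqP; rewrite mulmx_free_eq0 // => /eqP w0; apply/rowP => i.
have := congr1 (fun M : 'rV_m => M 0 (g i)) w0; rewrite !mxE => <-.
rewrite (bigD1 i) //= !mxE eqxx mulr1n mulr1 big1 ?addr0 // => k ki.
by rewrite !mxE (inj_eq ginj) (negbTE ki) mulr0n mulr0.
Qed.

Lemma dim_lt (P : 'rV[R]_n -> Prop) k k' : (k < k')%N -> has_dim P k -> has_dim P k' -> False.
Proof.
move=> kk [_ up] [[p' [pP pind]] _].
have h : (k.+2 <= k'.+1)%N by [].
have h' : (k.+1 <= k')%N by [].
apply: (negP (up (fun i => p' (widen_ord h i)) (fun i => pP _))).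
rewrite /aff_indep.
have -> : (\matrix_(i < k.+1, j < n) (p' (widen_ord h (lift ord0 i)) 0 j - p' (widen_ord h ord0) 0 j))
   = rowsub (widen_ord h') (\matrix_(i < k', j < n) (p' (lift ord0 i) 0 j - p' ord0 0 j)).
  apply/matrixP => i j; rewrite !mxE.
  by congr (p' _ 0 j - p' _ 0 j); apply: val_inj.
by apply: rowsub_free pind => a b /(congr1 val) /= ab; apply: val_inj.
Qed.

Lemma dim_uniq (P : 'rV[R]_n -> Prop) k k' : has_dim P k -> has_dim P k' -> k = k'.
Proof.
move=> h1 h2; case: (ltngtP k k') => // kk; exfalso.
  exact: dim_lt kk h1 h2.
exact: dim_lt kk h2 h1.
Qed.

Variable H : edges n.

Lemma Qt_sub x : Qtilde (R:=R) H x -> (x <= Em R H)%MS.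
Proof.
case=> w [_ [_ ->]]; apply: summx_sub => t _; apply: scalemx_sub.
case: t => [[|k] ht] /=; first exact: sub0mx.
have hk : (k < size (Lp R H))%N by [].
by have := row_sub (Ordinal hk) (Em R H); rewrite rowK.
Qed.

Lemma dimQt : has_dim (Qtilde (R:=R) H) (n - n_components H).
Proof.
rewrite -(rankE R H); split.
  set g := maxrankfun (Em R H).
  pose p (i : 'I_(\rank (Em R H)).+1) : 'rV[R]_n :=
    if unlift ord0 i is Some k then row (g k) (Em R H) else 0.
  exists p; split.
    move=> i; rewrite /p; case: (unlift ord0 i) => [k|]; last exact: Qt0.
    rewrite rowK; apply: Qt_pt.
    change ((Lp R H)`_(g k) \in 0 :: Lp R H).
    by rewrite in_cons mem_nth ?orbT.
  rewrite /aff_indep.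
  have -> : (\matrix_(i, j) (p (lift ord0 i) 0 j - p ord0 0 j)) = rowsub g (Em R H).
    apply/matrixP => i j; rewrite !mxE /p liftK unlift_none !mxE subr0.
    by [].
  exact: maxrowsub_free.
move=> p pQ; apply/negP; rewrite /aff_indep /row_free => /eqP hr.
set M := \matrix_(i, j) _ in hr.
have : (M <= Em R H)%MS.
  apply/row_subP => i.
  have -> : row i M = p (lift ord0 i) - p ord0 by apply/rowP => j; rewrite !mxE.
  by rewrite addmx_sub ?eqmx_opp ?Qt_sub.
by move/mxrankS; rewrite hr ltnn.
Qed.

End HasDim.

Section Main.
Local Open Scope ring_scope.
Variables (R : realFieldType) (n : nat).

Lemma ncomp_le (H : edges n) : (n_components H <= n)%N.
Proof. by rewrite -card_Rep; apply: leq_trans (max_card _) _; rewrite card_ord. Qed.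

Lemma ncomp_pos (H : edges n) : (0 < n)%N -> (0 < n_components H)%N.
Proof.
move=> n0; rewrite -card_Rep; have [r rR _] := rep_ex H (Ordinal n0).
by rewrite card_gt0; apply/set0Pn; exists r.
Qed.

Lemma ncomp_conn (G : edges n) : un_connected G -> (0 < n)%N -> n_components G = 1%N.
Proof.
move=> hc n0; apply/eqP; rewrite eqn_leq ncomp_pos // andbT -card_Rep.
apply/card_le1_eqP => r r' rR r'R; by move: (rep_uniq rR r'R (hc r r')) => ->.
Qed.

Lemma ncomp_setT (H : edges n) : ncomp H setT = n_components H.
Proof.
rewrite /ncomp /n_components; apply: eq_card => s.
by apply/imsetP/imsetP => [[i _ ->]|[i _ ->]]; exists i.
Qed.

Definition Kcut (G : edges n) (A : {set 'I_n}) := [set e in G | (e.1 \in A) == (e.2 \in A)].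

Lemma Kcut_sub G A : Kcut G A \subset G.
Proof. by apply/subsetP => e; rewrite inE => /andP[]. Qed.

Lemma hcomp_cut (G : edges n) (A : {set 'I_n}) i : i \in A -> connS G A ->
  hcomp (Kcut G A) i = A.
Proof.
move=> iA cA; apply/setP => j; rewrite inE; apply/idP/idP => h.
  apply: (@connect_inv _ (undir (Kcut G A)) (fun z => z \in A) i j) => // z w zA.
  by case/orP; rewrite inE => /andP[_ /eqP] /=; [rewrite zA => <- | rewrite zA => ->].
apply: connect_mono (cA _ _ iA h) => z w /and3P[zA wA /orP[e|e]].
  by rewrite /undir inE e zA wA.
by rewrite /undir !inE e zA wA orbT.
Qed.

Lemma Kcut_C (G : edges n) A : Kcut G (~: A) = Kcut G A.
Proof. by apply/setP => e; rewrite !inE; case: (e.1 \in A); case: (e.2 \in A). Qed.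

Lemma ncomp_cut (G H : edges n) A : validc G H setT A -> n_components (Kcut G A) = 2%N.
Proof.
move=> [_ [A0 [B0 [cA [cB _]]]]].
rewrite setTD in B0 cB; rewrite /n_components.
have hB : forall i, i \notin A -> hcomp (Kcut G A) i = ~: A.
  by move=> i iA; rewrite -Kcut_C; apply: hcomp_cut cB; rewrite inE.
have -> : [set [set j | connect (undir (Kcut G A)) i j] | i : 'I_n] = [set A; ~: A].
  apply/setP => s; apply/imsetP/idP => [[i _ ->]|].
    change (hcomp (Kcut G A) i \in [set A; ~: A]).
    case: (boolP (i \in A)) => iA.
      by rewrite (hcomp_cut iA cA) !inE eqxx.
    by rewrite hB // !inE eqxx orbT.
  rewrite !inE => /orP[/eqP ->|/eqP ->].
    by have /set0Pn[a aA] := A0; exists a => //; rewrite -/(hcomp (Kcut G A) a) (hcomp_cut aA cA).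
  have /set0Pn[b bB] := B0; exists b => //.
  by rewrite -/(hcomp (Kcut G A) b) hB //; rewrite inE in bB.
rewrite cards2; have /set0Pn[a aA] := A0.
suff -> : A != ~: A by []. apply/negP => /eqP hAC; have := aA; rewrite {1}hAC inE aA. by [].
Qed.

Lemma cut_facet (G H : edges n) A : increasing_dag G -> alternating G -> un_connected G ->
  validc G H setT A -> is_facet (Qtilde (R:=R) G) (Qtilde (R:=R) (Kcut G A)).
Proof.
move=> hdag halt hc vA.
have nK := ncomp_cut vA.
have n2 : (2 <= n)%N by rewrite -nK ncomp_le.
split.
  apply/(face_iff R hdag halt (Kcut_sub G A)).
  case: vA => [_ [_ [_ [_ [_ [_ nb]]]]]].
  exists (fun x => if x \in A then 0 else 1); split.
    move=> x y e; case: (boolP (x \in A)) => xA; case: (boolP (y \in A)) => yA;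
      rewrite ?lexx ?ler01 //.
    by exfalso; apply: (nb x y e _ yA); rewrite !inE xA.
  move=> x y e; rewrite inE e /=.
  case: (x \in A); case: (y \in A) => //=; split=> // /eqP;
    by rewrite ?oner_eq0 // eq_sym oner_eq0.
exists (n - 2)%N; split.
  have := dimQt R G; rewrite ncomp_conn //; last by lia.
  by have -> : (n - 2 + 1 = n - 1)%N by lia.
by have := dimQt R (Kcut G A); rewrite nK.
Qed.

End Main.

Unset Implicit Arguments.

Theorem mainTheorem14 (R : realFieldType) (n : nat) (G : {set 'I_n * 'I_n})
    (hdag : increasing_dag G) (halt : alternating G) (hconn : un_connected G)
    (d : nat) (hd : (1 <= d)%N) (H : {set 'I_n * 'I_n}) (hHG : H \subset G) :
  face_codim (Qtilde (R:=R) G) (Qtilde (R:=R) H) d <->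
  (n_components H = d.+1 /\
   exists Hs : 'I_d -> {set 'I_n * 'I_n},
     (forall i, Hs i \subset G /\ is_facet (Qtilde (R:=R) G) (Qtilde (R:=R) (Hs i))) /\
     H = \bigcap_(i < d) Hs i).
Proof.
have cle := ncomp_le H.
split.
  move=> [hface [m [dG dH]]].
  have e1 := dim_uniq dG (dimQt R G).
  have e2 := dim_uniq dH (dimQt R H).
  have n0 : (0 < n)%N.
    case: (posnP n) => [n00|//]; exfalso; move: e1 hd; lia.
  have cH : n_components H = d.+1.
    by move: e1; rewrite ncomp_conn // e2; lia.
  split=> //.
  have [f [hf1 hf2]] := (face_iff R hdag halt hHG).1 hface.
  have cardS : (#|[set: 'I_n]| <= n)%N by rewrite cardsT card_ord.
  have S0 : [set: 'I_n] != set0 by apply/set0Pn; exists (Ordinal n0); rewrite inE.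
  have hS : hclosed H setT by move=> *; rewrite inE.
  have cS : connS G setT.
    by move=> x y _ _; apply: connect_mono (hconn x y) => z w e; rewrite /rG !inE.
  have [L [sL vL cL]] := cuts_exist hHG hf1 hf2 cardS S0 hS cS.
  rewrite ncomp_setT cH /= in sL.
  have vA : forall i : 'I_d, validc G H setT (nth set0 L i).
    by move=> i; apply: vL; apply: mem_nth; rewrite sL.
  exists (fun i => Kcut G (nth set0 L i)); split.
    by move=> i; split; [exact: Kcut_sub | exact: cut_facet hdag halt hconn (vA i)].
  apply/setP => -[x y]; apply/idP/bigcapP.
    move=> eH i _; rewrite inE (subsetP hHG _ eH) /=.
    case: (vA i) => [_ [_ [_ [_ [_ [hA _]]]]]].
    apply/eqP; apply/idP/idP => h.
      by apply: hA h _; apply: connect1; rewrite /undir eH.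
    by apply: hA h _; apply: connect1; rewrite /undir eH orbT.
  move=> he.
  have : (x, y) \in Kcut G (nth set0 L (Ordinal hd)) by apply: he.
  rewrite inE => /andP[eG _].
  case: (boolP ((x, y) \in H)) => // eH; exfalso.
  have [A AL sep] := cL x y eG (in_setT x) (in_setT y) eH.
  have ik : (index A L < d)%N by rewrite -sL index_mem.
  have := he (Ordinal ik) isT; rewrite inE /= nth_index // => /andP[_ /eqP h].
  by move: sep; rewrite h eqxx.
move=> [cH [Hs [hHs eH]]].
have n0 : (0 < n)%N by move: cle; rewrite cH; lia.
have hF : forall i, exists f : 'I_n -> R, (forall x y, (x, y) \in G -> (f x <= f y)%R) /\
    (forall x y, (x, y) \in G -> ((x, y) \in Hs i <-> f x = f y)).
  move=> i; have [sHi [fHi _]] := hHs i.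
  exact: (face_iff R hdag halt sHi).1 fHi.
have [F hFi] := fin_all_exists hF.
split.
  apply/(face_iff R hdag halt hHG); exists (fun x => (\sum_i F i x)%R); split.
    by move=> x y e; apply: ler_sum => i _; apply: (hFi i).1.
  move=> x y e; split.
    rewrite eH => /bigcapP he; apply: eq_bigr => i _.
    by apply/((hFi i).2 x y e).1; apply: he.
  move=> hs; rewrite eH; apply/bigcapP => i _; apply/((hFi i).2 x y e).2.
  have h0 : (\sum_i (F i y - F i x) = 0)%R by rewrite sumrB hs subrr.
  have hz : (F i y - F i x = 0)%R.
    apply: (psumr_eq0P _ h0) => // k _; rewrite subr_ge0; exact: (hFi k).1 _ _ e.
  by apply/eqP; rewrite eq_sym -subr_eq0 hz.
exists (n - d.+1)%N; split.
  have := dimQt R G; rewrite ncomp_conn //.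
  by have -> : (n - d.+1 + d = n - 1)%N by move: cle; rewrite cH; lia.
by have := dimQt R H; rewrite cH.
Qed.
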